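(* Let $P=\{x\in\mathbb{R}^n: Ax\ge b\}$ with rational data be full-dimensional and pointed, let $\mathcal{I}\subseteq\{1,\dots,n\}$ and $P_I=\{x\in P: x_j\in\mathbb{Z}\ \forall j\in\mathcal{I}\}$. Let $\mathcal{T}$ be a finite index set and $P^t=\{x\in P: D^tx\ge D^t_0\}$, $t\in\mathcal{T}$, be the terms of a disjunction with $P_I\subseteq P_D:=\operatorname{cl}\operatorname{conv}(\bigcup_{t}P^t)$. For $t\in\mathcal{T}$ let $\mathcal{P}^{t*}$ and $\mathcal{R}^{t*}$ be the complete sets of extreme points and extreme rays of $P^t$, and let $\mathcal{P}^*=\bigcup_t\mathcal{P}^{t*}$, $\mathcal{R}^*=\bigcup_t\mathcal{R}^{t*}$. Then $(\mathcal{P}^*,\mathcal{R}^* )$ is proper. Every extreme ray solution $(\alpha,\beta)$ of the associated PRLP corresponds to a facet $\alpha^\top x\ge\beta$ of $P_D$. Conversely, for every facet $\alpha^\top x\ge\beta$ of $P_D$, the solution $(\alpha,\beta)$ to the PRLP is feasible and extreme.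
   Context: For finite sets $\mathcal{P},\mathcal{R}\subset\mathbb{R}^n$, the point-ray linear program (PRLP) has feasible region $\{(\alpha,\beta)\in\mathbb{R}^n\times\mathbb{R}: \alpha^\top p\ge\beta\ \forall p\in\mathcal{P},\ \alpha^\top r\ge 0\ \forall r\in\mathcal{R}\}$ (a polyhedral cone; ''extreme'' means an extreme ray of this cone). The collection $(\mathcal{P},\mathcal{R})$ is proper if $\alpha^\top x\ge\beta$ is valid for $P_I$ whenever $(\alpha,\beta)$ is feasible for the PRLP.
   Formalization: The claim that extreme ray solutions give facets covers only those with α ≠ 0, and the converse (every facet of $P_D$ is feasible and extreme) assumes $P_D$ is full-dimensional. The statement above fails without it. *)

(* Defs.v *)
From HB Require Import structures.
From mathcomp Require Import all_boot all_order all_algebra.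
From mathcomp Require Import reals.
Set Implicit Arguments. Unset Strict Implicit. Unset Printing Implicit Defensive.
Import Order.TTheory GRing.Theory Num.Theory.
Local Open Scope ring_scope.

Section Defs.
Variables (R : realType) (n : nat).
Local Notation vec := 'cV[R]_n.

Definition dot (a x : vec) : R := \sum_(i < n) a i 0 * x i 0.

Definition rational_mx (p q : nat) (M : 'M[R]_(p, q)) : Prop :=
  forall i j, exists r : rat, M i j = ratr r.

Definition polyh (m : nat) (M : 'M[R]_(m, n)) (c : 'cV[R]_m) (x : vec) : Prop :=
  forall i, c i 0 <= (M *m x) i 0.

Definition mixed_int (S : vec -> Prop) (I : {set 'I_n}) (x : vec) : Prop :=
  S x /\ (forall j, j \in I -> x j 0 \is a Num.int).

Definition conv (S : vec -> Prop) (x : vec) : Prop :=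
  exists (k : nat) (pts : 'I_k -> vec) (lam : 'I_k -> R),
    (forall i, S (pts i)) /\ (forall i, 0 <= lam i) /\ \sum_i lam i = 1 /\
    x = \sum_i lam i *: pts i.

(* topological closure (sup-norm, equivalently Euclidean) *)
Definition cl_set (S : vec -> Prop) (x : vec) : Prop :=
  forall eps : R, 0 < eps -> exists y, S y /\ forall i, `|x i 0 - y i 0| < eps.

Definition affine_indep (k : nat) (pts : 'I_k -> vec) : Prop :=
  forall lam : 'I_k -> R, \sum_i lam i *: pts i = 0 -> \sum_i lam i = 0 ->
    forall i, lam i = 0.

(* S contains k affinely independent points (i.e. dim S >= k - 1) *)
Definition dim_ge (S : vec -> Prop) (k : nat) : Prop :=
  exists pts : 'I_k -> vec, (forall i, S (pts i)) /\ affine_indep pts.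

(* dim S = k - 1 (k = 0 iff S is empty) *)
Definition dim_eqp (S : vec -> Prop) (k : nat) : Prop :=
  dim_ge S k /\ ~ dim_ge S k.+1.

Definition full_dim (S : vec -> Prop) : Prop := dim_ge S n.+1.

Definition pointed (S : vec -> Prop) : Prop :=
  forall x d, S x -> (forall lam : R, S (x + lam *: d)) -> d = 0.

Definition valid_ineq (S : vec -> Prop) (a : vec) (beta : R) : Prop :=
  forall x, S x -> beta <= dot a x.

Definition facet (S : vec -> Prop) (a : vec) (beta : R) : Prop :=
  valid_ineq S a beta /\
  exists k, dim_eqp S k.+1 /\ dim_eqp (fun x => S x /\ dot a x = beta) k.

Definition extreme_point (S : vec -> Prop) (x : vec) : Prop :=
  S x /\ forall y z (lam : R), S y -> S z -> 0 < lam < 1 ->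
    x = lam *: y + (1 - lam) *: z -> y = z.

Definition rec_cone (S : vec -> Prop) (r : vec) : Prop :=
  forall x (lam : R), S x -> 0 <= lam -> S (x + lam *: r).

Definition extreme_ray_of (C : vec -> Prop) (r : vec) : Prop :=
  r != 0 /\ C r /\ forall r1 r2, C r1 -> C r2 -> r = r1 + r2 ->
    (exists mu : R, 0 <= mu /\ r1 = mu *: r) /\
    (exists mu : R, 0 <= mu /\ r2 = mu *: r).

Definition extreme_ray (S : vec -> Prop) (r : vec) : Prop :=
  extreme_ray_of (rec_cone S) r.

Definition complete_rays (S : vec -> Prop) (Rs : seq vec) : Prop :=
  (forall r, r \in Rs -> extreme_ray S r) /\
  (forall r, extreme_ray S r -> exists mu : R, 0 < mu /\ mu *: r \in Rs).

Definition prlp_feasible (Pts Rays : vec -> Prop) (a : vec) (beta : R) : Prop :=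
  (forall p, Pts p -> beta <= dot a p) /\ (forall r, Rays r -> 0 <= dot a r).

Definition prlp_extreme (Pts Rays : vec -> Prop) (a : vec) (beta : R) : Prop :=
  prlp_feasible Pts Rays a beta /\ (a != 0 \/ beta != 0) /\
  forall a1 b1 a2 b2, prlp_feasible Pts Rays a1 b1 -> prlp_feasible Pts Rays a2 b2 ->
    a = a1 + a2 -> beta = b1 + b2 ->
    (exists mu : R, 0 <= mu /\ a1 = mu *: a /\ b1 = mu * beta) /\
    (exists mu : R, 0 <= mu /\ a2 = mu *: a /\ b2 = mu * beta).

Definition proper_coll (PI : vec -> Prop) (Pts Rays : vec -> Prop) : Prop :=
  forall a beta, prlp_feasible Pts Rays a beta -> valid_ineq PI a beta.

End Defs.

(* Main.v *)
Require Import Defs.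
From HB Require Import structures.
From mathcomp Require Import all_boot all_order all_algebra.
From mathcomp Require Import reals.
From mathcomp Require Import ring lra zify.
From Stdlib Require Import Classical FunctionalExtensionality PropExtensionality.
Import Order.TTheory GRing.Theory Num.Theory.
Local Open Scope ring_scope.
Set Implicit Arguments. Unset Strict Implicit. Unset Printing Implicit Defensive.
Section Basics.
Variables (R : realType) (n : nat).
Local Notation vec := 'cV[R]_n.

Lemma dotDr (a x y : vec) : dot a (x + y) = dot a x + dot a y.
Proof. by rewrite /dot -big_split /=; apply: eq_bigr => i _; rewrite mxE mulrDr. Qed.
Lemma dotZr (a x : vec) s : dot a (s *: x) = s * dot a x.
Proof. by rewrite /dot mulr_sumr; apply: eq_bigr => i _; rewrite mxE mulrCA. Qed.
Lemma dotDl (a b x : vec) : dot (a + b) x = dot a x + dot b x.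
Proof. by rewrite /dot -big_split /=; apply: eq_bigr => i _; rewrite mxE mulrDl. Qed.
Lemma dotZl (a x : vec) s : dot (s *: a) x = s * dot a x.
Proof. by rewrite /dot mulr_sumr; apply: eq_bigr => i _; rewrite mxE mulrA. Qed.
Lemma dot0r (a : vec) : dot a 0 = 0.
Proof. by rewrite /dot big1 // => i _; rewrite mxE mulr0. Qed.
Lemma dot0l (a : vec) : dot 0 a = 0.
Proof. by rewrite /dot big1 // => i _; rewrite mxE mul0r. Qed.
Lemma dotNr (a x : vec) : dot a (- x) = - dot a x.
Proof. by rewrite -scaleN1r dotZr mulN1r. Qed.
Lemma dotBr (a x y : vec) : dot a (x - y) = dot a x - dot a y.
Proof. by rewrite dotDr dotNr. Qed.
Lemma dotNl (a x : vec) : dot (- a) x = - dot a x.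
Proof. by rewrite -scaleN1r dotZl mulN1r. Qed.
Lemma dotBl (a b x : vec) : dot (a - b) x = dot a x - dot b x.
Proof. by rewrite dotDl dotNl. Qed.
Lemma dot_sumr (a : vec) k (F : 'I_k -> vec) :
  dot a (\sum_i F i) = \sum_i dot a (F i).
Proof.
elim/big_ind2: _ => //; first by rewrite dot0r.
by move=> x1 x2 y1 y2 <- <-; rewrite dotDr.
Qed.
Lemma dot_mx (a x : vec) : dot a x = (a^T *m x) 0 0.
Proof. by rewrite /dot mxE; apply: eq_bigr => i _; rewrite mxE. Qed.
Lemma dotC (a x : vec) : dot a x = dot x a.
Proof. by rewrite /dot; apply: eq_bigr => i _; rewrite mulrC. Qed.

Lemma negdotE (a z : vec) (i : 'I_1) : ((- a^T) *m z) i 0 = - dot a z.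
Proof. by rewrite mulNmx mxE ord1 -dot_mx. Qed.
End Basics.
Section Finite.
Variable (R : realType).

Lemma eps_seq (X : eqType) (s : seq X) (f g : X -> R) :
  (forall x, x \in s -> 0 <= f x) -> (forall x, x \in s -> f x = 0 -> g x = 0) ->
  exists eps, 0 < eps /\ forall x, x \in s -> eps * `|g x| <= f x.
Proof.
elim: s => [|y s IH] Hf Hg; first by exists 1; split => //.
have [e [e0 He]] : exists eps, 0 < eps /\ forall x, x \in s -> eps * `|g x| <= f x.
  by apply: IH => x xs; [apply: Hf | apply: Hg]; rewrite inE xs orbT.
have fy : 0 <= f y by apply: Hf; rewrite inE eqxx.
have [fy0|fyp] := eqVneq (f y) 0.
  exists e; split => // x; rewrite inE => /orP [/eqP ->|xs]; last exact: He.
  by rewrite fy0 (Hg y) ?inE ?eqxx // normr0 mulr0.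
have fyp' : 0 < f y by rewrite lt_neqAle eq_sym fyp fy.
have d0 : 0 < `|g y| + 1 by rewrite ltr_wpDl.
exists (Num.min e (f y / (`|g y| + 1))); split.
  by rewrite lt_min e0 divr_gt0.
move=> x; rewrite inE => /orP [/eqP ->|xs].
  apply: (le_trans (y := f y / (`|g y| + 1) * `|g y|)).
    by apply: ler_wpM2r => //; rewrite ge_min lexx orbT.
  rewrite mulrAC ler_pdivrMr // ler_pM2l // lerDl //.
apply: (le_trans (y := e * `|g x|)); last exact: He.
by apply: ler_wpM2r => //; rewrite ge_min lexx.
Qed.

Lemma argmin_ex (T : finType) (P : pred T) (f : T -> R) i0 :
  P i0 -> exists i, P i /\ forall j, P j -> f i <= f j.
Proof.
move=> Pi0; case: (arg_minP f Pi0) => i Pi Hi; by exists i; split.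
Qed.

Lemma fin_list (V : eqType) (X : V -> Prop) (F : finType) (f : V -> F) :
  (forall x y, X x -> X y -> f x = f y -> x = y) ->
  exists L : seq V, (forall x, X x -> x \in L) /\ (forall x, x \in L -> X x).
Proof.
move=> Hinj.
suff H : forall s : seq F, exists L : seq V,
    (forall x, X x -> f x \in s -> x \in L) /\ (forall x, x \in L -> X x).
  have [L [H1 H2]] := H (enum F); exists L; split => // x Xx.
  by apply: H1 => //; rewrite mem_enum.
elim => [|y s [L [H1 H2]]]; first by exists [::]; split.
case: (classic (exists x0, X x0 /\ f x0 = y)) => [[x0 [Xx0 fx0]]|Hn].
  exists (x0 :: L); split.
    move=> x Xx; rewrite !in_cons => /orP [/eqP fxy|xs]; last by rewrite (H1 x Xx xs) orbT.
    by rewrite (Hinj x x0) ?eqxx // fx0.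
  by move=> x; rewrite in_cons => /orP [/eqP ->|]; [| apply: H2].
exists L; split => // x Xx; rewrite in_cons => /orP [/eqP fxy|xs]; last exact: (H1 x Xx xs).
by exfalso; apply: Hn; exists x.
Qed.

End Finite.
Section Poly.
Variables (R : realType) (n m' : nat) (M : 'M[R]_(m', n)) (c : 'cV[R]_m').
Local Notation vec := 'cV[R]_n.
Local Notation Q := (polyh M c).

Definition tight (x : vec) i := (M *m x) i 0 == c i 0.
Definition vertexp (x : vec) :=
  forall d : vec, (forall i, tight x i -> (M *m d) i 0 = 0) -> d = 0.

Lemma MxE (x d : vec) s i :
  (M *m (x + s *: d)) i 0 = (M *m x) i 0 + s * (M *m d) i 0.
Proof. by rewrite mulmxDr -scalemxAr !mxE. Qed.

Lemma MxB (x d : vec) i :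
  (M *m (x - d)) i 0 = (M *m x) i 0 - (M *m d) i 0.
Proof. by rewrite -scaleN1r MxE mulN1r. Qed.

Lemma MxN (d : vec) i : (M *m (- d)) i 0 = - (M *m d) i 0.
Proof. by rewrite mulmxN mxE. Qed.

Lemma step_lemma a (x e : vec) : Q x ->
  (forall i, tight x i -> (M *m e) i 0 = 0) -> dot a e <= 0 ->
  (exists i, (M *m e) i 0 < 0) ->
  exists y, Q y /\ dot a y <= dot a x /\
    (#|[set i | ~~ tight y i]| < #|[set i | ~~ tight x i]|)%N.
Proof.
move=> Qx Hk Hae [i1 Hi1].
pose f i := ((M *m x) i 0 - c i 0) / (- (M *m e) i 0).
have [i0 [Hi0 Hmin]] := argmin_ex (P := [pred i | (M *m e) i 0 < 0]) f Hi1.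
rewrite /= in Hi0 Hmin.
have l0 : 0 <= f i0.
  by rewrite /f divr_ge0 // ?subr_ge0 ?Qx // oppr_ge0 ltW.
exists (x + f i0 *: e); split; [|split].
- move=> i; rewrite MxE; case: (ltP ((M *m e) i 0) 0) => h.
    have := Hmin i h; rewrite {2}/f ler_pdivlMr ?oppr_gt0 // => H; lra.
  have := Qx i; have : 0 <= f i0 * (M *m e) i 0 by rewrite mulr_ge0.
  lra.
- by rewrite dotDr dotZr gerDl mulr_ge0_le0.
- apply: proper_card; apply/properP; split.
    apply/subsetP => i; rewrite !inE; apply: contra => /eqP ht.
    by rewrite /tight MxE (Hk i) ?mulr0 ?addr0 ?ht //; apply/eqP.
  exists i0; rewrite !inE.
    by apply/negP => /Hk h; rewrite h ltxx in Hi0.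
  rewrite negbK /tight MxE /f.
  have hne : (M *m e) i0 0 != 0 by rewrite lt_eqF.
  apply/eqP; field; by [].
Qed.

Lemma vertex_exists : pointed Q -> forall a (x : vec), Q x ->
  (exists v, Q v /\ vertexp v /\ dot a v <= dot a x) \/
  (exists d : vec, (forall i, 0 <= (M *m d) i 0) /\ dot a d < 0).
Proof.
move=> Hpt a.
pose G (x : vec) := (exists v, Q v /\ vertexp v /\ dot a v <= dot a x) \/
  (exists d : vec, (forall i, 0 <= (M *m d) i 0) /\ dot a d < 0).
have main : forall x, Q x ->
    (forall y, Q y -> (#|[set i | ~~ tight y i]| < #|[set i | ~~ tight x i]|)%N -> G y) ->
    G x.
  move=> x Qx IH.
  have stepG : forall e : vec, (forall i, tight x i -> (M *m e) i 0 = 0) -> dot a e <= 0 ->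
      (exists i, (M *m e) i 0 < 0) -> G x.
    move=> e He1 He2 He3.
    have [y [Qy [Hay Hc]]] := step_lemma Qx He1 He2 He3.
    case: (IH y Qy Hc) => [[v [Qv [Vv Hv]]]|Hr]; last by right.
    by left; exists v; split => //; split => //; apply: le_trans Hay.
  case: (classic (vertexp x)) => Hv; first by left; exists x; split => //; split.
  have [d Hd] := not_all_ex_not _ _ Hv.
  have [Hk Hd0] := imply_to_and _ _ Hd.
  pose d' := if dot a d <= 0 then d else - d.
  have Hk' : forall i, tight x i -> (M *m d') i 0 = 0.
    move=> i /Hk hh; rewrite /d'; case: ifP => _ //.
    by rewrite mulmxN mxE hh oppr0.
  have Ha' : dot a d' <= 0.
    rewrite /d'; case: ifP => // /negbT; rewrite dotNr -ltNge oppr_le0; exact: ltW.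
  have Hd0' : d' <> 0.
    rewrite /d'; case: ifP => // _ /eqP; rewrite oppr_eq0 => /eqP //.
  case: (classic (forall i, 0 <= (M *m d') i 0)) => Hc.
    case: (ltP (dot a d') 0) => h; first by right; exists d'.
    have e0 : dot a d' = 0 by apply/le_anti; rewrite h Ha'.
    case: (classic (forall i, 0 <= (M *m - d') i 0)) => Hc2.
      exfalso; apply: Hd0'; apply: (Hpt x d' Qx) => lam i.
      rewrite MxE.
      have : (M *m d') i 0 = 0.
        by apply/le_anti; rewrite Hc andbT; have := Hc2 i; rewrite mulmxN mxE oppr_ge0.
      by move=> ->; rewrite mulr0 addr0; apply: Qx.
    have [i Hi] := not_all_ex_not _ _ Hc2.
    apply: (stepG (- d')).
    - by move=> j /Hk' hh; rewrite mulmxN mxE hh oppr0.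
    - by rewrite dotNr e0 oppr0.
    - by exists i; rewrite ltNge; apply/negP.
  have [i Hi] := not_all_ex_not _ _ Hc.
  apply: (stepG d') => //.
  by exists i; rewrite ltNge; apply/negP.
suff H : forall N (x : vec), (#|[set i | ~~ tight x i]| <= N)%N -> Q x -> G x.
  by move=> x; apply: H (leqnn _).
elim => [|N IH] x HN Qx; apply: main => // y Qy Hy.
  by move: (leq_trans Hy HN).
by apply: IH => //; rewrite -ltnS; apply: leq_trans Hy HN.
Qed.

Lemma normb (x : R) : - `|x| <= x /\ x <= `|x|.
Proof. split; last exact: ler_norm. by have := ler_norm (- x); rewrite normrN; lra. Qed.

Lemma vertex_extreme (x : vec) : Q x -> vertexp x -> extreme_point Q x.
Proof.
move=> Qx Hv; split => // y z l Qy Qz /andP [l0 l1] Hx.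
apply/eqP; rewrite -subr_eq0; apply/eqP; apply: Hv => i /eqP ti.
have E : (M *m x) i 0 = l * (M *m y) i 0 + (1 - l) * (M *m z) i 0.
  by rewrite Hx mulmxDr -!scalemxAr !mxE.
have hy := Qy i; have hz := Qz i.
have h1 : 0 <= l * ((M *m y) i 0 - c i 0) by apply: mulr_ge0; lra.
have h2 : 0 <= (1 - l) * ((M *m z) i 0 - c i 0) by apply: mulr_ge0; lra.
have h3 : l * ((M *m y) i 0 - c i 0) = 0 by lra.
have h4 : (1 - l) * ((M *m z) i 0 - c i 0) = 0 by lra.
move/eqP: h3; rewrite mulf_eq0 (gt_eqF l0) /= subr_eq0 => /eqP h3.
move/eqP: h4; rewrite mulf_eq0 subr_eq0 (gt_eqF l1) /= subr_eq0 => /eqP h4.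
by rewrite MxB h3 h4 subrr.
Qed.

Lemma extreme_vertex (x : vec) : extreme_point Q x -> vertexp x.
Proof.
move=> [Qx Hext] d Hd.
have [e [e0 He]] : exists eps, 0 < eps /\ forall i, i \in enum 'I_m' ->
    eps * `|(M *m d) i 0| <= (M *m x) i 0 - c i 0.
  apply: eps_seq => i _; first by rewrite subr_ge0 Qx.
  by move/eqP; rewrite subr_eq0 => h; apply: Hd.
have Qp : forall s, `|s| <= e -> Q (x + s *: d).
  move=> s hs i; rewrite MxE; have := He i (mem_enum _ i).
  have [n1 n2] := normb (s * (M *m d) i 0).
  rewrite normrM in n1.
  have : `|s| * `|(M *m d) i 0| <= e * `|(M *m d) i 0| by rewrite ler_wpM2r.
  lra.
have ee : `|e| <= e by rewrite (ger0_norm (ltW e0)).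
have ee' : `|- e| <= e by rewrite normrN (ger0_norm (ltW e0)).
have hl : (0 < (1 / 2 : R)) && ((1/2 : R) < 1) by apply/andP; split; lra.
have := Hext (x + e *: d) (x + (- e) *: d) (1/2) (Qp e ee) (Qp (- e) ee') hl.
have Hx : x = 1 / 2 *: (x + e *: d) + (1 - 1 / 2) *: (x + - e *: d).
  by apply/matrixP => i j; rewrite !mxE; field.
move=> /(_ Hx) /eqP; rewrite -subr_eq0 opprD addrACA subrr add0r.
rewrite -scalerBl opprK scaler_eq0 => /orP [|/eqP //].
by rewrite -mulr2n mulrn_eq0 /= (gt_eqF e0).
Qed.

Lemma vertex_uniq (x y : vec) : vertexp x -> Q y ->
  (forall i, tight x i = tight y i) -> x = y.
Proof.
move=> Hv Qy Ht; apply/eqP; rewrite -subr_eq0; apply/eqP; apply: Hv => i ti.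
have ty : tight y i by rewrite -Ht.
by move/eqP: ti; move/eqP: ty; rewrite MxB => -> ->; rewrite subrr.
Qed.

Lemma rec_coneE (x0 : vec) : Q x0 ->
  rec_cone Q = (fun r => forall i, 0 <= (M *m r) i 0).
Proof.
move=> Qx0; apply: functional_extensionality => r.
apply: propositional_extensionality; split.
  move=> Hr i; case: (ltP ((M *m r) i 0) 0) => h //; exfalso.
  pose l := ((M *m x0) i 0 - c i 0 + 1) / (- (M *m r) i 0).
  have l0 : 0 <= l by rewrite divr_ge0 // ?oppr_ge0 ?ltW //; have := Qx0 i; lra.
  have := Hr x0 l Qx0 l0 i; rewrite MxE.
  have -> : l * (M *m r) i 0 = - ((M *m x0) i 0 - c i 0 + 1).
    by rewrite /l; field; rewrite lt_eqF.
  lra.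
move=> Hr x l Qx l0 i; rewrite MxE; have := Qx i; have := mulr_ge0 l0 (Hr i); lra.
Qed.

Lemma lin_zero (x0 e : vec) : Q x0 -> pointed Q ->
  (forall i, (M *m e) i 0 = 0) -> e = 0.
Proof. by move=> Qx0 Hpt He; apply: (Hpt x0 e Qx0) => l i; rewrite MxE He mulr0 addr0; apply: Qx0. Qed.

End Poly.

Lemma polyh_col (R : realType) n m1 m2 (M1 : 'M[R]_(m1, n)) (M2 : 'M[R]_(m2, n)) c1 c2 x :
  polyh (col_mx M1 M2) (col_mx c1 c2) x <-> polyh M1 c1 x /\ polyh M2 c2 x.
Proof.
rewrite /polyh mul_col_mx; split.
  move=> H; split => i; [have := H (lshift m2 i) | have := H (rshift m1 i)];
  by rewrite ?col_mxEu ?col_mxEd.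
move=> [H1 H2] i; rewrite -(splitK i); case: (split i) => j /=.
  by rewrite !col_mxEu.
by rewrite !col_mxEd.
Qed.
Section Cone.
Variables (R : realType) (n m' : nat) (M : 'M[R]_(m', n)) (c : 'cV[R]_m').
Local Notation vec := 'cV[R]_n.
Local Notation Q := (polyh M c).

Lemma MZE (v : vec) s i : (M *m (s *: v)) i 0 = s * (M *m v) i 0.
Proof. by rewrite -scalemxAr mxE. Qed.

Lemma cone_lemma (x0 : vec) : Q x0 -> pointed Q -> forall a : vec,
  (forall r, extreme_ray_of (fun r => forall i, 0 <= (M *m r) i 0) r -> 0 <= dot a r) ->
  forall d, (forall i, 0 <= (M *m d) i 0) -> 0 <= dot a d.
Proof.
move=> Qx0 Hpt a Hray d Cd; rewrite leNgt; apply/negP => hd.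
pose M2 := col_mx M (- a^T).
pose c2 : 'cV[R]_(m' + 1) := col_mx 0 (const_mx 1).
have Q2E : forall z, polyh M2 c2 z <-> (forall i, 0 <= (M *m z) i 0) /\ 1 <= - dot a z.
  move=> z; rewrite polyh_col /polyh; split => [[H1 H2]|[H1 H2]]; split.
  - by move=> i; have := H1 i; rewrite mxE.
  - by have := H2 0; rewrite negdotE !mxE.
  - by move=> i; rewrite mxE.
  - by move=> i; rewrite negdotE !mxE.
have Q2pt : pointed (polyh M2 c2).
  move=> z e /Q2E [Cz _] Hl; apply: (lin_zero Qx0 Hpt) => i.
  case: (eqVneq ((M *m e) i 0) 0) => // hne; exfalso.
  pose l := - ((M *m z) i 0 + 1) / (M *m e) i 0.
  have [H _] := (Q2E _).1 (Hl l); have := H i; rewrite MxE.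
  have -> : l * (M *m e) i 0 = - ((M *m z) i 0 + 1) by rewrite /l; field.
  lra.
pose z0 := (- (dot a d)^-1) *: d.
have hdn : dot a d != 0 by rewrite lt_eqF.
have Qz0 : polyh M2 c2 z0.
  apply/Q2E; split.
    move=> i; rewrite MZE mulr_ge0 // oppr_ge0 ltW // invr_lt0 //.
  by rewrite dotZr mulNr opprK mulVf.
case: (vertex_exists Q2pt 0 Qz0) => [[v [Qv [Vv _]]] | [e [_ he]]];
  last by rewrite dot0l ltxx in he.
have [Cv av] := (Q2E v).1 Qv.
have helper : forall e : vec, (forall i, (M *m v) i 0 = 0 -> (M *m e) i 0 = 0) ->
    (- dot a v = 1 -> - dot a e = 0) -> e = 0.
  move=> e H1 H2; apply: Vv => i; rewrite -(splitK i); case: (split i) => j /=;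
    rewrite /tight /M2 /c2 !mul_col_mx ?col_mxEu ?col_mxEd => /eqP h.
    by apply: H1; rewrite h mxE.
  rewrite negdotE; apply: H2; move: h.
  by rewrite negdotE mxE.
have av1 : - dot a v = 1.
  case: (eqVneq (- dot a v) 1) => // hne.
  have v0 : v = 0 by apply: helper => // h; exfalso; by rewrite h eqxx in hne.
  by move: av; rewrite v0 dot0r oppr0; lra.
have v0 : v != 0.
  by apply/eqP => v0; move: av1; rewrite v0 dot0r oppr0 => /eqP; rewrite eq_sym oner_eq0.
have key : forall r1 r2 : vec, (forall i, 0 <= (M *m r1) i 0) ->
    (forall i, 0 <= (M *m r2) i 0) -> v = r1 + r2 ->
    exists mu : R, 0 <= mu /\ r1 = mu *: v.
  move=> r1 r2 C1 C2 hv.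
  have e0 : r1 - (- dot a r1) *: v = 0.
    apply: helper.
      move=> i hi; rewrite MxB MZE hi mulr0 subr0.
      have := C1 i; have := C2 i; move: hi; rewrite hv mulmxDr mxE; lra.
    move=> _; have dv : dot a v = -1 by lra.
    by rewrite dotBr dotZr dv mulrN1 opprK subrr oppr0.
  have r1E : r1 = (- dot a r1) *: v by apply/eqP; rewrite -subr_eq0; apply/eqP.
  exists (- dot a r1); split => //.
  rewrite leNgt; apply/negP => hs.
  apply/negP: v0; apply/negPn/eqP; apply: (lin_zero Qx0 Hpt) => i.
  apply/le_anti; rewrite Cv andbT.
  have := C1 i; rewrite {1}r1E MZE => h.
  by rewrite -(nmulr_rge0 _ hs).
have hv : extreme_ray_of (fun r => forall i, 0 <= (M *m r) i 0) v.
  split; first exact: v0.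
  split; first exact: Cv.
  move=> r1 r2 C1 C2 hv; split; first exact: (key r1 r2).
  by apply: (key r2 r1) => //; rewrite addrC.
by have := Hray v hv; lra.
Qed.

End Cone.
Section Hull.
Variables (R : realType) (n : nat).
Local Notation vec := 'cV[R]_n.

Lemma conv1 (S : vec -> Prop) x : S x -> conv S x.
Proof.
move=> Sx; exists 1%N, (fun _ => x), (fun _ => 1); split => //; split.
  by move=> _; apply: ler01.
by rewrite !big_ord1 scale1r.
Qed.

Lemma sub_clconv (S : vec -> Prop) x : S x -> cl_set (conv S) x.
Proof.
move=> Sx e e0; exists x; split; first exact: conv1.
by move=> i; rewrite subrr normr0.
Qed.

Lemma conv2 (S : vec -> Prop) y z (mu : R) : S y -> S z -> 0 <= mu <= 1 ->
  conv S (mu *: y + (1 - mu) *: z).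
Proof.
move=> Sy Sz /andP [m0 m1].
exists 2%N, (fun i : 'I_2 => if val i == 0%N then y else z),
  (fun i : 'I_2 => if val i == 0%N then mu else 1 - mu); split.
  by move=> i; case: ifP.
split; first by move=> i; case: ifP => _ //; rewrite subr_ge0.
by rewrite !big_ord_recr !big_ord0 /= !add0r; split => //; rewrite addrC subrK.
Qed.

Lemma valid_conv (S : vec -> Prop) a b :
  (forall x, S x -> b <= dot a x) -> forall x, conv S x -> b <= dot a x.
Proof.
move=> H x [k [pts [lam [Sp [l0 [l1 ->]]]]]].
rewrite dot_sumr -[b]mul1r -l1 mulr_suml; apply: ler_sum => i _.
by rewrite dotZr; apply: ler_wpM2l => //; apply: H.
Qed.

Lemma dot_close (a x y : vec) e : (forall i, `|x i 0 - y i 0| < e) ->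
  dot a y - dot a x <= e * \sum_i `|a i 0|.
Proof.
move=> H; rewrite -dotBr.
apply: (le_trans (ler_norm _)); apply: (le_trans (ler_norm_sum _ _ _)).
rewrite mulr_sumr; apply: ler_sum => i _; rewrite !mxE normrM mulrC.
apply: ler_wpM2r => //; rewrite distrC; exact: ltW.
Qed.

Lemma valid_clconv (S : vec -> Prop) a b :
  (forall x, S x -> b <= dot a x) -> forall x, cl_set (conv S) x -> b <= dot a x.
Proof.
move=> H x Hx; rewrite leNgt; apply/negP => hx.
have K0 : 0 <= \sum_i `|a i 0| by apply: sumr_ge0 => i _.
pose e := (b - dot a x) / (\sum_i `|a i 0| + 1).
have e0 : 0 < e by rewrite divr_gt0 ?subr_gt0 // ltr_wpDl.
have [y [Cy Hy]] := Hx e e0.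
have := dot_close a Hy; have := valid_conv H Cy.
have : e * (\sum_i `|a i 0| + 1) = b - dot a x by rewrite /e divfK // lt0r_neq0 // ltr_wpDl.
rewrite mulrDr mulr1; lra.
Qed.

Lemma ray_cl (S : vec -> Prop) p q r : S p -> S q ->
  (forall l, 0 <= l -> S (q + l *: r)) -> cl_set (conv S) (p + r).
Proof.
move=> Sp Sq Sr e e0.
pose D := \sum_i `|(q - p) i 0|.
have D0 : 0 <= D by apply: sumr_ge0.
pose l := D / e + 1.
have l1 : 1 <= l by rewrite lerDr divr_ge0 // ltW.
have l0 : 0 < l by lra.
exists ((1 - l^-1) *: p + (1 - (1 - l^-1)) *: (q + l *: r)); split.
  apply: conv2 => //; first exact: Sr (ltW l0).
  rewrite subr_ge0 invr_le1 ?unitfE ?(gt_eqF l0) // l1 /= lerBlDr lerDl invr_ge0 ltW //.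
move=> i; rewrite !mxE.
have -> : p i 0 + r i 0 - ((1 - l^-1) * p i 0 + (1 - (1 - l^-1)) * (q i 0 + l * r i 0))
   = - (l^-1 * (q - p) i 0).
  by rewrite !mxE; field; rewrite gt_eqF.
rewrite normrN normrM ger0_norm ?invr_ge0 ?ltW // mulrC -(ltr_pM2r l0) mulfVK ?gt_eqF //.
have hi : `|(q - p) i 0| <= D.
  rewrite /D (bigD1 i) //= lerDl; apply: sumr_ge0 => j _; exact: normr_ge0.
have : e * l = D + e by rewrite /l mulrDr mulr1 mulrCA mulfV ?gt_eqF // mulr1.
lra.
Qed.

End Hull.
Section Aff.
Variables (R : realType) (n : nat).
Local Notation vec := 'cV[R]_n.

Definition PM k (pts : 'I_k -> vec) : 'M[R]_(k, n + 1) :=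
  row_mx (\matrix_(i, j) pts i j 0) (const_mx 1).
Definition hom (a : vec) (b : R) : 'cV[R]_(n + 1) := col_mx a (const_mx (- b)).

Lemma PM_mul k (pts : 'I_k -> vec) (v : 'rV[R]_k) :
  v *m PM pts = 0 <-> (\sum_i v 0 i *: pts i = 0 /\ \sum_i v 0 i = 0).
Proof.
have E1 : v *m (\matrix_(i, j) pts i j 0) = (\sum_i v 0 i *: pts i)^T.
  apply/matrixP => x j; rewrite ord1 !mxE summxE; apply: eq_bigr => i _.
  by rewrite !mxE.
have E2 : v *m (const_mx 1 : 'M_(k, 1)) = const_mx (\sum_i v 0 i).
  by apply/matrixP => x j; rewrite ord1 !mxE; apply: eq_bigr => i _; rewrite mxE mulr1.
rewrite /PM mul_mx_row E1 E2; split.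
  move/eqP; rewrite row_mx_eq0 => /andP [/eqP h1 /eqP h2]; split.
    by rewrite -[LHS]trmxK h1 trmx0.
  by move/matrixP: h2 => /(_ 0 0); rewrite !mxE.
move=> [h1 h2]; apply/eqP; rewrite row_mx_eq0 h1 trmx0 eqxx /=.
by apply/eqP/matrixP => x j; rewrite !mxE h2.
Qed.

Lemma aff_rowfree k (pts : 'I_k -> vec) : affine_indep pts <-> row_free (PM pts).
Proof.
split.
  move=> Ha; apply: inj_row_free => v /PM_mul [h1 h2].
  apply/matrixP => x i; rewrite ord1 mxE; exact: Ha h1 h2 i.
move=> Hf lam h1 h2 i.
have : (\row_j lam j) *m PM pts = 0.
  by apply/PM_mul; split; [rewrite -[RHS]h1 | rewrite -[RHS]h2];
    apply: eq_bigr => j _; rewrite mxE.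
move/eqP; rewrite mulmx_free_eq0 // => /eqP /matrixP /(_ 0 i).
by rewrite !mxE.
Qed.

Lemma PM_hom k (pts : 'I_k -> vec) a b i : (PM pts *m hom a b) i 0 = dot a (pts i) - b.
Proof.
rewrite /PM /hom mul_row_col mxE; congr (_ + _).
  by rewrite mxE /dot; apply: eq_bigr => j _; rewrite mxE mulrC.
by rewrite mxE big_ord1 !mxE mul1r.
Qed.

Lemma square_kernel (pts : 'I_(n + 1) -> vec) a b : affine_indep pts ->
  (forall i, dot a (pts i) = b) -> a = 0 /\ b = 0.
Proof.
move=> /aff_rowfree; rewrite row_free_unit => Hu Hd.
have H0 : PM pts *m hom a b = 0.
  by apply/matrixP => i j; rewrite ord1 PM_hom Hd subrr mxE.
have : hom a b = 0 by rewrite -(mulKmx Hu (hom a b)) H0 mulmx0.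
move/eqP; rewrite col_mx_eq0 => /andP [/eqP -> /eqP /matrixP /(_ 0 0)].
by rewrite !mxE => /eqP; rewrite oppr_eq0 => /eqP ->.
Qed.

Lemma too_many k (pts : 'I_k -> vec) : (n + 1 < k)%N -> ~ affine_indep pts.
Proof.
move=> hk /aff_rowfree /eqP hr; have := rank_leq_col (PM pts).
by rewrite hr leqNgt hk.
Qed.

Lemma aff_sub k k' (pts : 'I_k -> vec) (g : 'I_k' -> 'I_k) :
  injective g -> affine_indep pts -> affine_indep (fun i => pts (g i)).
Proof.
move=> Hg Ha lam' h1 h2 i.
pose lam j := \sum_(i | g i == j) lam' i.
have E1 : \sum_j lam j *: pts j = \sum_i lam' i *: pts (g i).
  rewrite (partition_big g xpredT) //=; apply: eq_bigr => j _.
  by rewrite /lam scaler_suml; apply: eq_bigr => i' /eqP ->.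
have E2 : \sum_j lam j = \sum_i lam' i.
  by rewrite (partition_big g xpredT).
have := Ha lam; rewrite E1 E2 => /(_ h1 h2 (g i)).
rewrite /lam (big_pred1 i) // => i' /=.
by apply/eqP/eqP => [/Hg|->].
Qed.

Lemma dim_ge_mono (S : vec -> Prop) i j : (i <= j)%N -> dim_ge S j -> dim_ge S i.
Proof.
move=> hij [pts [Sp Ha]]; exists (fun x => pts (widen_ord hij x)); split => //.
by apply: aff_sub Ha => x y /(congr1 val) /= /val_inj.
Qed.

End Aff.
Section Generic.
Variables (R : realType) (n : nat).
Local Notation vec := 'cV[R]_n.

Lemma split_l (j : 'I_n) : split (lshift 1%N j) = inl j.
Proof. exact: (unsplitK (inl _ j)). Qed.
Lemma split_r (j : 'I_1) : split (rshift n j) = inr j.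
Proof. exact: (unsplitK (inr _ j)). Qed.

Definition ext_fam (xs : 'I_n -> vec) (y : vec) (i : 'I_(n + 1)) : vec :=
  match split i with inl j => xs j | inr _ => y end.

Lemma ext_l xs y (j : 'I_n) : ext_fam xs y (lshift 1%N j) = xs j.
Proof. by rewrite /ext_fam split_l. Qed.
Lemma ext_r xs y (j : 'I_1) : ext_fam xs y (rshift n j) = y.
Proof. by rewrite /ext_fam split_r. Qed.

Lemma ext_aff (xs : 'I_n -> vec) y a beta : affine_indep xs ->
  (forall j, dot a (xs j) = beta) -> dot a y != beta -> affine_indep (ext_fam xs y).
Proof.
move=> Ax Hx Hy lam h1 h2.
have E1 := congr1 (dot a) h1; rewrite dot0r dot_sumr big_split_ord /= in E1.
rewrite big_split_ord /= in h1; rewrite big_split_ord /= in h2.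
rewrite big_ord1 in E1; rewrite big_ord1 in h1; rewrite big_ord1 in h2.
move: E1 h1; rewrite !ext_r.
rewrite (eq_bigr (fun j => lam (lshift 1%N j) * beta)); last first.
  by move=> j _; rewrite ext_l dotZr Hx.
rewrite (eq_bigr (fun j => lam (lshift 1%N j) *: xs j)); last first.
  by move=> j _; rewrite ext_l.
rewrite -mulr_suml => E1 h1.
have hs : \sum_(i < n) lam (lshift 1 i) = - lam (rshift n ord0) by apply/eqP; rewrite -addr_eq0 h2.
rewrite hs dotZr in E1.
have l0 : lam (rshift n ord0) = 0.
  have : lam (rshift n ord0) * (dot a y - beta) = 0 by rewrite mulrBr; lra.
  by move/eqP; rewrite mulf_eq0 subr_eq0 (negPf Hy) orbF => /eqP.
rewrite l0 scale0r addr0 in h1; rewrite l0 oppr0 in hs.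
have Hl := Ax _ h1 hs.
move=> i; rewrite -(splitK i); case: (split i) => j /=; first exact: Hl.
by rewrite ord1.
Qed.

Lemma facet_nontriv (S : vec -> Prop) a beta : facet S a beta -> ~ (a = 0 /\ beta = 0).
Proof.
move=> [Hval [k [[Hk1 Hk2] [Hf1 Hf2]]]] [a0 b0]; apply: Hf2.
have [pts [Sp Ap]] := Hk1; exists pts; split => // i; split => //.
by rewrite a0 b0 dot0l.
Qed.

Lemma facet_extreme (S : vec -> Prop) (Feas : vec -> R -> Prop) a beta :
  (forall a' b', Feas a' b' -> valid_ineq S a' b') -> full_dim S -> facet S a beta ->
  forall a1 b1 a2 b2, Feas a1 b1 -> Feas a2 b2 -> a = a1 + a2 -> beta = b1 + b2 ->
  exists mu : R, 0 <= mu /\ a1 = mu *: a /\ b1 = mu * beta.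
Proof.
move=> HV Hfull Hfac; have Hnt := facet_nontriv Hfac.
move: Hfac => [Hval [k [[Hk1 Hk2] [Hf1 Hf2]]]].
have kn : (n <= k)%N.
  rewrite leqNgt; apply/negP => hk; apply: Hk2; apply: dim_ge_mono Hfull; by [].
have [xs [Fx Ax]] := dim_ge_mono kn Hf1.
have [y [Sy ay]] : exists y, S y /\ dot a y != beta.
  apply: NNPP => Hn; apply: Hnt.
  have [pts [Sp Ap]] := Hfull.
  pose g := cast_ord (addn1 n).
  apply: (@square_kernel R n (fun i => pts (g i)) a beta).
    by apply: aff_sub Ap; exact: cast_ord_inj.
  move=> i; apply: NNPP => hne; apply: Hn; exists (pts (g i)); split => //.
  by apply/eqP.
have ay' : beta < dot a y by rewrite lt_neqAle eq_sym ay Hval.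
have Aext := ext_aff Ax (fun j => (Fx j).2) ay.
move=> a1 b1 a2 b2 F1 F2 ha hb.
have V1 := HV _ _ F1; have V2 := HV _ _ F2.
have Hx1 : forall j, dot a1 (xs j) = b1.
  move=> j; have [Sj dj] := Fx j; have h1 := V1 _ Sj; have h2 := V2 _ Sj.
  move: dj; rewrite ha dotDl hb; lra.
pose mu := (dot a1 y - b1) / (dot a y - beta).
have hden : dot a y - beta != 0 by rewrite subr_eq0.
have mu0 : 0 <= mu by rewrite /mu divr_ge0 // subr_ge0 ?V1 // ltW.
exists mu; split => //.
have Hk : forall i, dot (a1 - mu *: a) (ext_fam xs y i) = b1 - mu * beta.
  move=> i; rewrite /ext_fam; case: (split i) => j.
    by rewrite dotBl dotZl Hx1 (Fx j).2.
  by rewrite dotBl dotZl /mu; field.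
have [e1 e2] := square_kernel Aext Hk.
by split; apply/eqP; rewrite -subr_eq0; apply/eqP.
Qed.

Lemma ge_lin (u w beta : R) : (forall l, 0 <= l -> beta <= u + l * w) -> 0 <= w.
Proof.
move=> H; rewrite leNgt; apply/negP => hw.
pose l := (u - beta + 1) / (- w).
have hl : l * w = - (u - beta + 1) by rewrite /l; field; rewrite lt_eqF.
have := H 0; rewrite mul0r addr0 => h0.
have := H l; rewrite hl.
have : 0 <= l by rewrite /l divr_ge0 // ?oppr_ge0 ?ltW //; lra.
move=> l0 /(_ l0); lra.
Qed.

Lemma no_ray_empty (S : vec -> Prop) r : extreme_ray S r -> exists x, S x.
Proof.
move=> [r0 [_ H]]; apply: NNPP => Hn; move/eqP: r0; apply.
have C : forall z, rec_cone S z by move=> z x l Sx; exfalso; apply: Hn; exists x.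
have hr : r = (r + r) + (- r) by rewrite addrK.
have [_ [mu [m0 hm]]] := H (r + r) (- r) (C _) (C _) hr.
have : (1 + mu) *: r = 0 by rewrite scalerDl scale1r -hm subrr.
move/eqP; rewrite scaler_eq0 => /orP [|/eqP //].
by rewrite gt_eqF // ltr_pwDl.
Qed.

End Generic.
Section Part2.
Variables (R : realType) (n : nat).
Local Notation vec := 'cV[R]_n.
Variables (Pts Rays : vec -> Prop) (Lp Lr : seq vec).
Hypothesis HLp : forall p, Pts p -> p \in Lp.
Hypothesis HLp' : forall p, p \in Lp -> Pts p.
Hypothesis HLr : forall r, Rays r -> r \in Lr.
Hypothesis HLr' : forall r, r \in Lr -> Rays r.

Lemma perturb a beta : prlp_extreme Pts Rays a beta ->
  forall c gam, (forall p, Pts p -> dot a p = beta -> dot c p = gam) ->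
  (forall r, Rays r -> dot a r = 0 -> dot c r = 0) ->
  exists nu : R, c = nu *: a /\ gam = nu * beta.
Proof.
move=> [[Fp Fr] [_ Hext]] c gam Hp Hr.
have [e1 [e10 He1]] : exists eps, 0 < eps /\ forall p, p \in Lp ->
    eps * `|dot c p - gam| <= dot a p - beta.
  apply: eps_seq => p /HLp' Pp; first by rewrite subr_ge0 Fp.
  by move/eqP; rewrite subr_eq0 => /eqP h; rewrite Hp // subrr.
have [e2 [e20 He2]] : exists eps, 0 < eps /\ forall r, r \in Lr ->
    eps * `|dot c r| <= dot a r.
  apply: eps_seq => r /HLr' Rr; first exact: Fr.
  exact: Hr.
pose e := Num.min e1 e2.
have e0 : 0 < e by rewrite lt_min e10 e20.
have ee1 : e <= e1 by rewrite ge_min lexx.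
have ee2 : e <= e2 by rewrite ge_min lexx orbT.
have feas : forall s : R, `|s| <= e ->
    prlp_feasible Pts Rays ((1/2) *: a + (s/2) *: c) ((1/2) * beta + (s/2) * gam).
  move=> s hs; split.
    move=> p Pp; rewrite dotDl !dotZl.
    have h := He1 p (HLp Pp).
    have := normb (s * (dot c p - gam)); rewrite normrM => -[h1 _].
    have : `|s| * `|dot c p - gam| <= e1 * `|dot c p - gam|.
      by apply: ler_wpM2r => //; apply: le_trans ee1.
    lra.
  move=> r Rr; rewrite dotDl !dotZl.
  have h := He2 r (HLr Rr).
  have := normb (s * dot c r); rewrite normrM => -[h1 _].
  have : `|s| * `|dot c r| <= e2 * `|dot c r|.
    by apply: ler_wpM2r => //; apply: le_trans ee2.
  lra.
have he : `|e| <= e by rewrite ger0_norm // ltW.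
have he' : `|- e| <= e by rewrite normrN ger0_norm // ltW.
have ha : a = ((1/2) *: a + (e/2) *: c) + ((1/2) *: a + (- e/2) *: c).
  by apply/matrixP => i j; rewrite !mxE; field.
have hb : beta = ((1/2) * beta + (e/2) * gam) + ((1/2) * beta + (- e/2) * gam).
  by field.
have [[mu [_ [h1 h2]]] _] := Hext _ _ _ _ (feas e he) (feas (- e) he') ha hb.
exists ((mu - 1/2) / (e/2)); split.
  apply/matrixP => i j; move/matrixP: h1 => /(_ i j); rewrite !mxE => h1.
  have -> : c i j = (mu * a i j - 1/2 * a i j) / (e/2).
    by rewrite -h1; field; rewrite gt_eqF.
  by field; rewrite gt_eqF.
have -> : gam = (mu * beta - 1/2 * beta) / (e/2) by rewrite -h2; field; rewrite gt_eqF.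
by field; rewrite gt_eqF.
Qed.

Lemma rowsub_PM k k' (xs : 'I_k -> vec) (f : 'I_k' -> 'I_k) :
  rowsub f (PM xs) = PM (fun i => xs (f i)).
Proof.
apply/matrixP => i j; rewrite mxE /PM -(splitK j); case: (split j) => j'.
  by rewrite !row_mxEl !mxE.
by rewrite !row_mxEr !mxE.
Qed.

Lemma hom_scale (a : vec) beta (mu : R) : hom (mu *: a) (mu * beta) = mu *: hom a beta.
Proof.
rewrite /hom scale_col_mx; congr col_mx.
by apply/matrixP => i j; rewrite !mxE mulrN.
Qed.

Variable (S : vec -> Prop).
Hypothesis H1 : forall p, Pts p -> S p.
Hypothesis H4 : forall p r, Pts p -> Rays r -> S (p + r).
Hypothesis H6 : forall a' b', prlp_feasible Pts Rays a' b' -> valid_ineq S a' b'.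

Lemma facet_of_extreme a beta : prlp_extreme Pts Rays a beta -> a != 0 -> facet S a beta.
Proof.
move=> Hex an0.
have Hval := H6 Hex.1.
have PL := perturb Hex.
have [p0 [Pp0 ap0]] : exists p0, Pts p0 /\ dot a p0 = beta.
  apply: NNPP => Hn.
  have [nu [hc hg]] : exists nu : R, (0 : vec) = nu *: a /\ 1 = nu * beta.
    apply: PL => [p Pp hp|r _ _]; last by rewrite dot0l.
    by exfalso; apply: Hn; exists p.
  move: hc => /esym /eqP; rewrite scaler_eq0 (negPf an0) orbF => /eqP nu0.
  by move: hg; rewrite nu0 mul0r => /eqP; rewrite oner_eq0.
have [y [Sy ay]] : exists y, S y /\ dot a y != beta.
  apply: NNPP => Hn.
  have Hon : forall x, S x -> dot a x = beta.
    by move=> x Sx; apply: NNPP => hx; apply: Hn; exists x; split => //; apply/eqP.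
  have F2 : prlp_feasible Pts Rays (- a) (- beta).
    split; first by move=> p Pp; rewrite dotNl (Hon _ (H1 Pp)).
    move=> r Rr; rewrite dotNl.
    have := Hon _ (H4 Pp0 Rr); rewrite dotDr ap0 => h.
    have -> : dot a r = 0 by lra.
    by rewrite oppr0.
  have F1 : prlp_feasible Pts Rays (2%:R *: a) (2%:R * beta).
    have [Fp Fr] := Hex.1; split.
      by move=> p Pp; rewrite dotZl ler_wpM2l // Fp.
    by move=> r Rr; rewrite dotZl mulr_ge0 // Fr.
  have ha : a = 2%:R *: a + - a by rewrite scaler_nat mulr2n addrK.
  have hb : beta = 2%:R * beta + - beta by rewrite mulr_natl mulr2n addrK.
  have [_ [mu [m0 [hm _]]]] := Hex.2.2 _ _ _ _ F1 F2 ha hb.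
  have : (1 + mu) *: a = 0 by rewrite scalerDl scale1r -hm subrr.
  move/eqP; rewrite scaler_eq0 (negPf an0) orbF => /eqP h.
  by move: m0; rewrite -(addKr 1 mu) h; lra.
have ay' : beta < dot a y by rewrite lt_neqAle eq_sym ay Hval.
pose Lf := [seq p <- Lp | dot a p == beta] ++
           [seq p0 + r | r <- [seq r <- Lr | dot a r == 0]].
have LfF : forall x, x \in Lf -> S x /\ dot a x = beta.
  move=> x; rewrite mem_cat => /orP [|].
    by rewrite mem_filter => /andP [/eqP h /HLp' Px]; split => //; apply: H1.
  move/mapP => [r]; rewrite mem_filter => /andP [/eqP h /HLr' Rr] ->.
  by split; [apply: H4 | rewrite dotDr ap0 h addr0].
have Lkill : forall c gam, (forall x, x \in Lf -> dot c x = gam) ->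
    exists nu : R, c = nu *: a /\ gam = nu * beta.
  move=> c gam Hk; apply: PL.
    move=> p Pp hp; apply: Hk; rewrite mem_cat mem_filter hp eqxx /=.
    by rewrite HLp.
  move=> r Rr hr.
  have h0 : dot c p0 = gam.
    by apply: Hk; rewrite mem_cat mem_filter ap0 eqxx HLp.
  have h1 : dot c (p0 + r) = gam.
    apply: Hk; rewrite mem_cat; apply/orP; right; apply/mapP; exists r => //.
    by rewrite mem_filter hr eqxx HLr.
  by move: h1; rewrite dotDr h0; lra.
pose N := size Lf.
pose xs (i : 'I_N) := nth 0 Lf i.
have xsF : forall i, S (xs i) /\ dot a (xs i) = beta.
  by move=> i; apply: LfF; rewrite mem_nth.
pose E := PM xs.
have rankE : (n <= \rank E)%N.
  rewrite leqNgt; apply/negP => hr.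
  pose K := kermx E^T.
  have rK : (2 <= \rank K)%N by rewrite mxrank_ker mxrank_tr; lia.
  pose w := (hom a beta)^T.
  have nKw : ~~ (K <= w)%MS.
    apply/negP => /mxrankS h; have := rank_leq_row w; lia.
  have [i ni] := row_subPn nKw.
  pose u := row i K.
  have uE : u *m E^T = 0 by apply/sub_kermxP; exact: row_sub.
  pose h := u^T.
  have Eh : E *m h = 0 by rewrite /h -[E]trmxK -trmx_mul uE trmx0.
  pose c := usubmx h; pose gam := - (dsubmx h) 0 0.
  have hE : h = hom c gam.
    rewrite -[h]vsubmxK /hom; congr col_mx.
    by apply/matrixP => x j; rewrite [x]ord1 [j]ord1 /gam !mxE opprK.
  have [nu [hc hg]] : exists nu : R, c = nu *: a /\ gam = nu * beta.
    apply: Lkill => x xL.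
    have ix : (index x Lf < N)%N by rewrite index_mem.
    have := Eh; move/matrixP => /(_ (Ordinal ix) 0).
    rewrite hE PM_hom mxE /xs /= nth_index //.
    by move/eqP; rewrite subr_eq0 => /eqP.
  apply/negP: ni; apply/negPn/sub_rVP; exists nu.
  by rewrite /u -[row i K]trmxK -/h hE hc hg hom_scale /w linearZ.
pose f := maxrankfun E.
have Af : affine_indep (fun i => xs (f i)).
  by apply/aff_rowfree; rewrite -rowsub_PM; exact: maxrowsub_free.
pose ys (j : 'I_n) := xs (f (widen_ord rankE j)).
have Ay : affine_indep ys.
  by apply: (aff_sub (g := widen_ord rankE)) Af => x1 x2 /(congr1 val) /= /val_inj.
have ysF : forall j, S (ys j) /\ dot a (ys j) = beta by move=> j; apply: xsF.
have Aext := ext_aff Ay (fun j => (ysF j).2) ay.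
split => //; exists n; split; split.
- exists (fun i => ext_fam ys y (cast_ord (esym (addn1 n)) i)); split.
    by move=> i; rewrite /ext_fam; case: (split _) => j; [exact: (ysF j).1 | exact: Sy].
  by apply: aff_sub Aext; exact: cast_ord_inj.
- move=> [pts [_ Ap]]; apply: (too_many (k := n.+2)) Ap; lia.
- by exists ys.
- move=> [pts [Fp Ap]].
  pose g := cast_ord (addn1 n).
  have [a0 _] := @square_kernel R n (fun i => pts (g i)) a beta
     (aff_sub (@cast_ord_inj _ _ _) Ap) (fun i => (Fp (g i)).2).
  by move/eqP: an0.
Qed.

End Part2.
Unset Implicit Arguments.
Theorem corollary3 (R : realType) (n m : nat) (A : 'M[R]_(m, n)) (b : 'cV[R]_m)
    (I : {set 'I_n}) (T : finType) (k : T -> nat)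
    (D : forall t : T, 'M[R]_(k t, n)) (D0 : forall t : T, 'cV[R]_(k t))
    (Rt : T -> seq 'cV[R]_n) :
  rational_mx A -> rational_mx b ->
  full_dim (polyh A b) -> pointed (polyh A b) ->
  let P := polyh A b in
  let PI := mixed_int P I in
  let Pt := fun t x => P x /\ polyh (D t) (D0 t) x in
  let PD := cl_set (conv (fun x => exists t, Pt t x)) in
  (forall x, PI x -> PD x) ->
  (forall t, complete_rays (Pt t) (Rt t)) ->
  let Pstar := fun p => exists t, extreme_point (Pt t) p in
  let Rstar := fun r => exists t, r \in Rt t in
  [/\ proper_coll PI Pstar Rstar,
      (forall a beta, prlp_extreme Pstar Rstar a beta -> a != 0 -> facet PD a beta) &
      (full_dim PD -> forall a beta, facet PD a beta ->
         prlp_feasible Pstar Rstar a beta /\ prlp_extreme Pstar Rstar a beta)].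
Proof.
move=> ratA ratb Hfull Hpt P PI Pt PD HPI Hrays Pstar Rstar.
have PtE : forall t, Pt t = polyh (col_mx A (D t)) (col_mx b (D0 t)).
  move=> t; apply: functional_extensionality => x.
  by apply: propositional_extensionality; rewrite polyh_col.
have Ptpt : forall t, pointed (polyh (col_mx A (D t)) (col_mx b (D0 t))).
  move=> t x d /polyh_col [Px _] Hl; apply: (Hpt x d Px) => l.
  by have [] := (polyh_col _ _ _ _ _).1 (Hl l).
have validPt : forall a beta, prlp_feasible Pstar Rstar a beta ->
    forall t x, Pt t x -> beta <= dot a x.
  move=> a beta [Fp Fr] t x; rewrite PtE => Qx.
  case: (vertex_exists (Ptpt t) a Qx) => [[v [Qv [Vv hv]]]|[d [Cd hd]]].
    apply: le_trans hv; apply: Fp; exists t; rewrite PtE.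
    exact: vertex_extreme.
  exfalso; move: hd; apply/negP; rewrite -leNgt.
  apply: (cone_lemma Qx (Ptpt t)) => // r Hr.
  have [_ Hc] := Hrays t.
  have := Hc r; rewrite /extreme_ray PtE (rec_coneE Qx) => /(_ Hr) [mu [mu0 Hmu]].
  have := Fr _ (ex_intro _ t Hmu); rewrite dotZr => h.
  by rewrite -(pmulr_rge0 _ mu0).
have validPD : forall a beta, prlp_feasible Pstar Rstar a beta ->
    forall x, PD x -> beta <= dot a x.
  move=> a beta Hf; apply: valid_clconv => x [t Ptx]; exact: validPt Hf t x Ptx.
have PstarPD : forall p, Pstar p -> PD p.
  by move=> p [t [Ptp _]]; apply: sub_clconv; exists t.
have rayPD : forall t r, r \in Rt t -> exists q, Pt t q /\
    forall l, 0 <= l -> Pt t (q + l *: r).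
  move=> t r rin; have Hr := (Hrays t).1 r rin.
  have [q Ptq] := no_ray_empty Hr; exists q; split => // l l0.
  exact: Hr.2.1 q l Ptq l0.
split.
- move=> a beta Hf x PIx; exact: validPD Hf x (HPI x PIx).
- move=> a beta Hex an0.
  have [Lp [HLp HLp']] : exists L : seq 'cV[R]_n,
      (forall p, Pstar p -> p \in L) /\ (forall p, p \in L -> Pstar p).
    suff H : forall s : seq T, exists L : seq 'cV[R]_n,
        (forall t, t \in s -> forall p, extreme_point (Pt t) p -> p \in L) /\
        (forall p, p \in L -> Pstar p).
      have [L [H1 H2]] := H (enum T); exists L; split => // p [t Ht].
      by apply: (H1 t) => //; rewrite mem_enum.
    elim => [|t s [L [H1 H2]]]; first by exists [::].
    have inj : forall x y, extreme_point (Pt t) x -> extreme_point (Pt t) y ->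
        [set i | tight (col_mx A (D t)) (col_mx b (D0 t)) x i] =
        [set i | tight (col_mx A (D t)) (col_mx b (D0 t)) y i] -> x = y.
      move=> x y; rewrite PtE => Ex Ey hxy.
      apply: (vertex_uniq (extreme_vertex Ex) Ey.1) => i.
      by move/setP: hxy => /(_ i); rewrite !inE.
    have [Lt [G1 G2]] := fin_list inj.
    exists (Lt ++ L); split.
      move=> t'; rewrite in_cons => /orP [/eqP ->|ts] p Hp; rewrite mem_cat.
        by rewrite G1.
      by rewrite (H1 t') ?orbT.
    move=> p; rewrite mem_cat => /orP [/G2 Hp|/H2 //]; by exists t.
  pose Lr := flatten [seq Rt t | t <- enum T].
  have HLr : forall r, Rstar r -> r \in Lr.
    move=> r [t rt]; apply/flatten_mapP; exists t => //; by rewrite mem_enum.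
  have HLr' : forall r, r \in Lr -> Rstar r.
    by move=> r /flatten_mapP [t _ rt]; exists t.
  apply: (facet_of_extreme HLp HLp' HLr HLr') => //.
  + move=> p r [t' [Ptp _]] [t rt].
    have [q [Ptq Hq]] := rayPD t r rt.
    apply: (ray_cl (S := fun x => exists t, Pt t x) (q := q)).
    * by exists t'.
    * by exists t.
    * by move=> l l0; exists t; apply: Hq.
- move=> Hfd a beta Hfac.
  have Hfeas : prlp_feasible Pstar Rstar a beta.
    split; first by move=> p /PstarPD; apply: Hfac.1.
    move=> r [t rt]; have [q [Ptq Hq]] := rayPD t r rt.
    apply: (ge_lin (u := dot a q) (beta := beta)) => l l0.
    rewrite -dotZr -dotDr; apply: Hfac.1; apply: sub_clconv; exists t; exact: Hq.
  split => //; split => //; split.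
    have nt := facet_nontriv Hfac.
    case: (eqVneq a 0) => [a0|an0]; [right; apply/eqP => b0; apply: nt; split | left] => //.
  move=> a1 b1 a2 b2 F1 F2 ha hb; split.
    exact: (facet_extreme validPD Hfd Hfac F1 F2 ha hb).
  apply: (facet_extreme validPD Hfd Hfac F2 F1); by rewrite addrC.
Qed.
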